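(* Consider a word $uav$ with $a \in A$ and $|ua| = i$. If the attribute $(x_i,y_i)$ at position $i$ satisfies $x_i + y_i > k+1$, then $uav \sim_k uv$.
   Context: $A$ is a finite alphabet and $k\in\mathbb{N}$. A word $a_1\cdots a_\ell$ is a (scattered) subword of $v$ if $v=v_0a_1v_1\cdots a_\ell v_\ell$; Simon's congruence $u\sim_k v$ holds iff $u$ and $v$ have the same subwords of length at most $k$. An $\mathsf{X}$-ranker is a nonempty word over $\{\mathsf{X}_a : a\in A\}$ and a $\mathsf{Y}$-ranker a nonempty word over $\{\mathsf{Y}_a : a\in A\}$; for a word $w$, $\mathsf{X}_a(w)$ is the smallest $a$-position of $w$, $r\mathsf{X}_a(w)$ is the smallest $a$-position greater than $r(w)$, $\mathsf{Y}_a(w)$ is the greatest $a$-position, and $r\mathsf{Y}_a(w)$ is the greatest $a$-position smaller than $r(w)$ (possibly undefined). The attribute of position $i$ of a word is $(x_i,y_i)$, where $x_i$ is the length of a shortest $\mathsf{X}$-ranker reaching $i$ and $y_i$ is the length of a shortest $\mathsf{Y}$-ranker reaching $i$. *)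

(* Defs.v *)
(* Words over a finite alphabet A are sequences [seq A].
   Positions of a word w are 1-indexed: 1 <= j <= size w, with letter nth _ w j.-1. *)
From mathcomp Require Import all_boot.
Set Implicit Arguments. Unset Strict Implicit. Unset Printing Implicit Defensive.

Section Rankers.
Variable A : finType.
Implicit Types (w u v s : seq A) (a : A).

Definition subword s w : bool := subseq s w.
Definition simon (k : nat) u v : Prop :=
  forall s, size s <= k -> subword s u = subword s v.

(* smallest a-position of w strictly greater than p *)
Definition next_pos w a (p : nat) : option nat :=
  let t := drop p w in
  if a \in t then Some (p + index a t).+1 else None.

(* greatest a-position of w strictly smaller than p *)
Definition prev_pos w a (p : nat) : option nat :=
  let t := take p.-1 w in
  if a \in t then Some (size t - index a (rev t)) else None.

(* An X-ranker X_{a1}...X_{an} is represented by the nonempty word [:: a1; ...; an],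
   evaluated left to right: X_a(w) = smallest a-position (i.e. > 0),
   r X_a (w) = smallest a-position > r(w). *)
Definition evalX w (r : seq A) : option nat :=
  foldl (fun o a => obind (next_pos w a) o) (Some 0) r.

(* Y-rankers: Y_a(w) = greatest a-position (i.e. < size w + 1),
   r Y_a (w) = greatest a-position < r(w). *)
Definition evalY w (r : seq A) : option nat :=
  foldl (fun o a => obind (prev_pos w a) o) (Some (size w).+1) r.

Definition reachesX w (r : seq A) (i : nat) : Prop := 0 < size r /\ evalX w r = Some i.
Definition reachesY w (r : seq A) (i : nat) : Prop := 0 < size r /\ evalY w r = Some i.

Definition shortestX w i n : Prop :=
  (exists r, reachesX w r i /\ size r = n) /\ (forall r, reachesX w r i -> n <= size r).
Definition shortestY w i n : Prop :=
  (exists r, reachesY w r i /\ size r = n) /\ (forall r, reachesY w r i -> n <= size r).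

Definition attribute w i (x y : nat) : Prop := shortestX w i x /\ shortestY w i y.

End Rankers.

(* Main.v *)
Require Import Defs.
From mathcomp Require Import all_boot.
From mathcomp Require Import zify.

Section Aux.
Variable A : finType.
Implicit Types (w u v s r : seq A) (a c d x : A).

Lemma foldl_None_X w r :
  foldl (fun o a => obind (next_pos w a) o) None r = None.
Proof. by elim: r. Qed.

Lemma foldl_None_Y w r :
  foldl (fun o a => obind (prev_pos w a) o) None r = None.
Proof. by elim: r. Qed.

Lemma next_pos_shift w c p :
  next_pos w c p = omap (addn p) (next_pos (drop p w) c 0).
Proof.
rewrite /next_pos drop0; case: ifP => //= _.
by rewrite add0n addnS.
Qed.

Lemma foldlX_shift r w p :
  foldl (fun o a => obind (next_pos w a) o) (Some p) r
  = omap (addn p) (evalX (drop p w) r).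
Proof.
elim: r w p => [|c r IH] w p; first by rewrite /= addn0.
rewrite /evalX /= next_pos_shift.
case: (next_pos (drop p w) c 0) => [q|] /=; last by rewrite !foldl_None_X.
rewrite IH IH drop_drop.
have omapK (o : option nat) : omap (addn (p + q)) o = omap (addn p) (omap (addn q) o).
  by case: o => //= e; rewrite addnA.
by rewrite omapK [q + p]addnC.
Qed.

Lemma evalX_cons_eq x w R : evalX (x :: w) (x :: R) = omap (addn 1) (evalX w R).
Proof.
rewrite /evalX /=.
have -> : next_pos (x :: w) x 0 = Some 1 by rewrite /next_pos /= inE eqxx /=.
by rewrite (foldlX_shift R (x :: w) 1) /= drop0.
Qed.

Lemma evalX_cons_neq x w d R : d != x ->
  evalX (x :: w) (d :: R) = omap S (evalX w (d :: R)).
Proof.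
move=> dx; rewrite /evalX /=.
have E1 : next_pos (x :: w) d 0 = omap S (next_pos w d 0).
  by rewrite /next_pos !drop0 /= inE (negbTE dx) /= eq_sym (negbTE dx); case: ifP.
rewrite E1; case: (next_pos w d 0) => [q|] /=; last by rewrite !foldl_None_X.
rewrite (foldlX_shift R (x :: w) q.+1) (foldlX_shift R w q) /=.
by case: (evalX (drop q w) R).
Qed.

Lemma keyX u c t r : subseq r u -> ~~ subseq (rcons r c) u ->
  evalX (u ++ c :: t) (rcons r c) = Some (size u).+1.
Proof.
elim: u r => [|x u IH] r.
  rewrite subseq0 => /eqP -> _ /=.
  by rewrite evalX_cons_eq.
case: r => [|d r].
  move=> _; change (rcons [::] c) with [:: c] in *.
  rewrite sub1seq inE negb_or => /andP [cx cu].
  rewrite cat_cons evalX_cons_neq // (IH [::]) //.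
    exact: sub0seq.
  by rewrite (_ : rcons [::] c = [:: c]) // sub1seq.
case: (eqVneq d x) => [->|dx].
  rewrite /= eqxx => H1 H2.
  by rewrite evalX_cons_eq IH.
rewrite /= (negbTE dx) => H1 H2.
rewrite evalX_cons_neq // -rcons_cons IH //.
Qed.

Lemma prev_next w c p : p <= (size w).+1 ->
  prev_pos w c p = omap (fun q => (size w).+1 - q) (next_pos (rev w) c ((size w).+1 - p)).
Proof.
move=> Hp; rewrite /prev_pos /next_pos drop_rev.
have -> : size w - ((size w).+1 - p) = p.-1 by case: p Hp => [|p] /= Hp; lia.
rewrite mem_rev; case: ifP => //= Hc.
have Hs : size (take p.-1 w) = p.-1 by rewrite size_takel //; move: Hp; case: (p) => //= p'; lia.
congr Some.
have : index c (rev (take p.-1 w)) < size (rev (take p.-1 w)) by rewrite index_mem mem_rev.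
rewrite size_rev Hs; lia.
Qed.

Lemma next_pos_le w c p q : next_pos w c p = Some q -> q <= size w.
Proof.
rewrite /next_pos; case: ifP => // H [<-].
have := H; rewrite -index_mem size_drop => Hi.
have : p < size w by move: H; case: (ltnP p (size w)) => // Hw; rewrite drop_oversize.
by move=> _; rewrite -ltn_subRL.
Qed.

Lemma foldlY w r p : p <= (size w).+1 ->
  foldl (fun o a => obind (prev_pos w a) o) (Some p) r =
  omap (fun q => (size w).+1 - q)
    (foldl (fun o a => obind (next_pos (rev w) a) o) (Some ((size w).+1 - p)) r).
Proof.
elim: r p => [|c r IH] p Hp /=; first by rewrite subKn.
rewrite prev_next //.
case E: (next_pos (rev w) c ((size w).+1 - p)) => [q|] /=; last by rewrite foldl_None_X foldl_None_Y.
have Hq := @next_pos_le _ _ _ _ E; rewrite size_rev in Hq.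
rewrite IH; last lia.
by rewrite subKn //; lia.
Qed.

Lemma evalY_evalX w r : evalY w r = omap (fun q => (size w).+1 - q) (evalX (rev w) r).
Proof. by rewrite /evalY foldlY // subnn. Qed.

Lemma keyY u a v s : subseq s v -> ~~ subseq (a :: s) v ->
  evalY (u ++ a :: v) (rcons (rev s) a) = Some (size u).+1.
Proof.
move=> H1 H2.
rewrite evalY_evalX rev_cat rev_cons cat_rcons keyX.
- by rewrite /= size_cat /= size_rev; congr Some; lia.
- by rewrite subseq_rev.
- by rewrite -rev_cons subseq_rev.
Qed.

Lemma split_subseq s (xs ys : seq A) : subseq s (xs ++ ys) ->
  exists s1 s2, s = s1 ++ s2 /\ subseq s1 xs /\ subseq s2 ys.
Proof.
case/subseqP => m Hm ->.
exists (mask (take (size xs) m) xs), (mask (drop (size xs) m) ys).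
rewrite -mask_cat; last by rewrite size_takel // Hm size_cat leq_addr.
rewrite cat_take_drop; split => //; split; exact: mask_subseq.
Qed.

Lemma extend u a v s2 s1 : subseq s1 u -> subseq s2 (a :: v) ->
  ~~ subseq (s1 ++ s2) (u ++ v) ->
  exists s1' s2', s1 ++ s2 = s1' ++ a :: s2' /\ subseq s1' u /\
    ~~ subseq (rcons s1' a) u /\ subseq s2' v /\ ~~ subseq (a :: s2') v.
Proof.
elim: s2 s1 => [|c s2 IH] s1 H1 H2 Hn.
  case/negP: Hn; rewrite cats0; exact: subseq_trans H1 (prefix_subseq u v).
case H3: (subseq (rcons s1 c) u).
  have H2' : subseq s2 (a :: v) by apply: subseq_trans (subseq_cons s2 c) H2.
  case: (IH (rcons s1 c) H3 H2'); first by rewrite cat_rcons.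
  move=> s1' [s2' [E H]]; exists s1', s2'; split => //; by rewrite -cat_rcons.
case: (eqVneq c a) => [Eca|Nca].
  subst c; move: H2; rewrite /= eqxx => H2.
  case H4: (subseq (a :: s2) v).
    by case/negP: Hn; apply: cat_subseq.
  by exists s1, s2; rewrite H3 H4.
move: H2; rewrite /= (negbTE Nca) => H2.
by case/negP: Hn; apply: cat_subseq.
Qed.

End Aux.

Theorem proposition3 (A : finType) (k : nat) (u v : seq A) (a : A) (i xi yi : nat) :
  size (rcons u a) = i ->
  attribute (u ++ a :: v) i xi yi ->
  k.+1 < xi + yi ->
  simon k (u ++ a :: v) (u ++ v).
Proof.
rewrite size_rcons => Hi [[_ HX] [_ HY]] Hk s Hs; rewrite /subword.
apply/idP/idP; last first.
  move=> H; apply: subseq_trans H _; apply: cat_subseq => //; exact: subseq_cons.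
move=> H; apply/negPn/negP => Hn.
case: (@split_subseq A _ _ _ H) => s1 [s2 [Es [H1 H2]]].
rewrite Es in Hn.
case: (@extend A _ _ _ _ _ H1 H2 Hn) => s1' [s2' [E [H3 [H4 [H5 H6]]]]].
have Hx := HX (rcons s1' a).
have Hy := HY (rcons (rev s2') a).
rewrite !size_rcons size_rev in Hx Hy.
rewrite -Hi in Hx Hy.
have {Hx} Hx := Hx (conj (ltac:(by rewrite size_rcons) : 0 < size (rcons s1' a)) (@keyX A u a v s1' H3 H4)).
have {Hy} Hy := Hy (conj (ltac:(by rewrite size_rcons) : 0 < size (rcons (rev s2') a)) (@keyY A u a v s2' H5 H6)).
have : size s = size s1' + (size s2').+1 by rewrite Es E size_cat.
lia.
Qed.
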